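(* $W_c(4,2)=34$. More precisely: there is a 2-coloring of $\mathbb{Z}_{33}$ with no monochromatic non-degenerate 4-AP, while for every $M\ge 34$ every 2-coloring of $\mathbb{Z}_M$ contains a monochromatic non-degenerate 4-AP.
   Context: For an integer $M\ge1$, a 4-AP in $\mathbb{Z}_M=\mathbb{Z}/M\mathbb{Z}$ is a tuple $(i,i+r,i+2r,i+3r)\pmod M$ with $i\in\mathbb{Z}_M$ and $r\in\{1,\dots,M-1\}$; it is non-degenerate if its four residues are pairwise distinct, and monochromatic under a coloring $\chi:\mathbb{Z}_M\to\{B,R\}$ if all four terms receive the same color. The cyclic van der Waerden number $W_c(4,2)$ is the smallest $N$ such that for all $M\ge N$, every 2-coloring of $\mathbb{Z}_M$ contains a monochromatic non-degenerate 4-AP. *)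

(* Defs.v *)
From mathcomp Require Import all_boot.
Set Implicit Arguments. Unset Strict Implicit. Unset Printing Implicit Defensive.

(* Z_M is represented by 'I_M (residues 0..M-1); colors B/R by bool. *)

Definition ap_term (M i r k : nat) : nat := (i + k * r) %% M.

Definition nondeg4 (M i r : nat) : bool :=
  uniq [:: ap_term M i r 0; ap_term M i r 1; ap_term M i r 2; ap_term M i r 3].

Definition has_mono_nondeg_4AP (M : nat) (chi : 'I_M -> bool) : Prop :=
  exists (i : 'I_M) (r : nat),
    [/\ 0 < r, r < M, nondeg4 M i r &
      forall (k : nat) (j : 'I_M), k < 4 -> nat_of_ord j = ap_term M i r k ->
        chi j = chi i].

(* Main.v *)
Require Import Defs.
From mathcomp Require Import all_boot.
From mathcomp Require Import zify.

Definition maxterm N i r := foldr maxn 0 [seq ap_term N i r k | k <- iota 0 4].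

Definition lvl N (cyc : bool) n : seq (nat * nat) :=
  [seq p <- [seq (i, r) | i <- iota 0 N, r <- iota 1 N.-1] |
     if cyc then nondeg4 N p.1 p.2 && (maxterm N p.1 p.2 == n)
     else (p.1 + 3 * p.2 < N) && (p.1 + 3 * p.2 == n)].

Definition mkC N cyc := [seq lvl N cyc n | n <- iota 0 N].

Definition mono N (cs : seq (seq (nat * nat))) (s : seq bool) n c :=
  has (fun p => all (fun k => let x := ap_term N p.1 p.2 k in
        (x == n) || ((x < n) && (nth false s x == c))) (iota 0 4)) (nth [::] cs n).

Fixpoint search N cs fuel (s : seq bool) : bool :=
  match fuel with 0 => false | fuel'.+1 =>
    if size s < N then
      all (fun c => if mono N cs s (size s) c then true else search N cs fuel' (rcons s c)) [:: true; false]
    else false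
  end.

Lemma sound N cs fuel s : search N cs fuel s ->
  forall f : nat -> bool, (forall k, k < size s -> f k = nth false s k) ->
  exists n p, p \in nth [::] cs n /\ forall k, k < 4 -> f (ap_term N p.1 p.2 k) = f n.
Proof.
elim: fuel s => [|fuel IH] s //=; case: ifP => // _ /andP [Ht /andP [Hf0 _]] f Hf.
have H : mono N cs s (size s) (f (size s)) || search N cs fuel (rcons s (f (size s))).
  by case: (f (size s)); [move: Ht|move: Hf0]; case: ifP.
case/orP: H.
- move=> /hasP [p Hp /allP Hk]; exists (size s), p; split => // k Hk4.
  have := Hk k; rewrite mem_iota add0n => /(_ Hk4) /orP [/eqP -> //|/andP [Hl /eqP He]].
  by rewrite Hf.
- move=> Hs; apply: (IH _ Hs) => k; rewrite size_rcons ltnS leq_eqVlt nth_rcons.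
  by case/orP => [/eqP ->|Hk]; [rewrite ltnn eqxx|rewrite Hk Hf].
Qed.

Lemma mem_nth_flatten {T : eqType} (cs : seq (seq T)) n p :
  p \in nth [::] cs n -> p \in flatten cs.
Proof.
elim: cs n => [|c cs IH] [|n] //=; rewrite mem_cat.
  by move=> ->.
by move=> /IH ->; rewrite orbT.
Qed.

Lemma ap_small N a d k : a + 3 * d < N -> k < 4 -> ap_term N a d k = a + k * d.
Proof. move=> H Hk; rewrite /ap_term modn_small //; nia. Qed.

Definition cs35 := mkC 35 false.
Definition cs34 := mkC 34 true.

Lemma H35 : search 35 cs35 36 [::].
Proof. vm_compute. reflexivity. Qed.
Lemma P35 : all (fun p => (0 < p.2) && (p.1 + 3 * p.2 < 35) && nondeg4 35 p.1 p.2) (flatten cs35).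
Proof. vm_compute. reflexivity. Qed.
Lemma H34 : search 34 cs34 35 [::].
Proof. vm_compute. reflexivity. Qed.
Lemma P34 : all (fun p => [&& 0 < p.2, p.2 < 34, p.1 < 34 & nondeg4 34 p.1 p.2]) (flatten cs34).
Proof. vm_compute. reflexivity. Qed.

Definition pat33 : seq bool :=
  [seq x == 1 | x <- [:: 1;1;1;0;1;1;0;1;0;0;0;1;1;1;0;1;1;0;1;0;0;0;1;1;1;0;1;1;0;1;0;0;0]].

Lemma C33 : all (fun i => all (fun r => ~~ nondeg4 33 i r ||
   has (fun k => nth false pat33 (ap_term 33 i r k) != nth false pat33 i) (iota 0 4))
   (iota 1 32)) (iota 0 33).
Proof. vm_compute. reflexivity. Qed.

Lemma big_case M (chi : 'I_M -> bool) : 35 <= M -> has_mono_nondeg_4AP chi.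
Proof.
case: M chi => [|M] chi // HM.
set f := fun k => chi (inord k).
have [n [[a d] [Hp Hk]]] := @sound _ _ _ _ H35 f (fun k (H : k < 0) => False_ind _ (notF H)).
have := (elimT allP P35) _ (mem_nth_flatten _ _ _ Hp) => /= /andP [/andP [Hd Ha] Hnd].
have Ha' : a < M.+1 by lia.
have HaM : a + 3 * d < M.+1 by lia.
exists (inord a), d; rewrite inordK //; split => //; first lia.
  by move: Hnd; rewrite /nondeg4 !(@ap_small 35 a d) // !(@ap_small M.+1 a d).
move=> k j Hk4 Hj.
have -> : j = inord (ap_term 35 a d k).
  apply: val_inj => /=; rewrite Hj (@ap_small M.+1 a d) // (@ap_small 35 a d) // inordK //; nia.
have := Hk k Hk4; have := Hk 0 isT; rewrite /f /= => H0 ->; rewrite -H0.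
by rewrite (@ap_small 35 a d) // mul0n addn0.
Qed.

Lemma case34 (chi : 'I_34 -> bool) : has_mono_nondeg_4AP chi.
Proof.
set f := fun k => chi (inord k).
have [n [[a d] [Hp Hk]]] := @sound _ _ _ _ H34 f (fun k (H : k < 0) => False_ind _ (notF H)).
have := (elimT allP P34) _ (mem_nth_flatten _ _ _ Hp) => /= /and4P [Hd Hd' Ha Hnd].
exists (inord a), d; rewrite inordK //; split => //.
move=> k j Hk4 Hj.
have -> : j = inord (ap_term 34 a d k).
  by apply: val_inj => /=; rewrite Hj inordK // /ap_term ltn_pmod.
have := Hk k Hk4; have := Hk 0 isT; rewrite /f /= => H0 ->; rewrite -H0.
by rewrite /ap_term addn0 modn_small.
Qed.

Theorem theorem11 :
  (exists chi : 'I_33 -> bool, ~ has_mono_nondeg_4AP chi) /\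
  (forall M : nat, 34 <= M ->
     forall chi : 'I_M -> bool, has_mono_nondeg_4AP chi).
Proof.
split.
  exists (fun j => nth false pat33 j) => [[i [r [Hr Hr' Hnd H]]]].
  have Hi : (i : nat) \in iota 0 33 by rewrite mem_iota ltn_ord.
  have Hri : r \in iota 1 32 by rewrite mem_iota Hr add1n.
  have := (elimT allP ((elimT allP C33) _ Hi)) _ Hri.
  rewrite Hnd orFb => Hh. move/hasP: Hh => [k]; rewrite mem_iota add0n => Hk4.
  have Ho : ap_term 33 i r k < 33 by rewrite /ap_term ltn_pmod.
  by rewrite (H k (Ordinal Ho) Hk4 erefl) eqxx.
move=> M; rewrite leq_eqVlt => /orP [/eqP <-|HM] chi; first exact: case34.
exact: big_case.
Qed.
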